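(* Assume (STAB). Then for any $\Omega\subseteq\Lambda$ the deformation $y\equiv0$ is a strongly stable equilibrium of $E^\Omega$. Precisely, for all $v\in\mathscr W_0(\Omega)$, $$\langle\delta^2E^\Omega(0)v,v\rangle=\psi''(0)\sum_{b\in\mathcal B^\Omega}Dv_b^2,\qquad\text{and}\qquad \psi''(0)\ge\lambda_d>0.$$
   Context: Lattice $\Lambda:=\tfrac{a_1+a_2}{3}+\{ma_1+na_2:m,n\in\mathbb Z\}$ with $a_1=(1,0)^T$, $a_2=(\tfrac12,\tfrac{\sqrt3}2)^T$; bonds $\mathcal B$ are oriented nearest-neighbour pairs; $\mathcal B^\Omega$ those with both endpoints in $\Omega$. $\mathscr W(\Omega)$: functions $\Omega\to\mathbb R$; $Dy_b:=y(\eta)-y(\xi)$ for $b=(\xi,\eta)$; $\xi_0=(0,\sqrt3/3)^T$; $\mathscr W_0(\Omega)=\{v:v(\xi_0)=0,\ \mathrm{supp}(Dv)\text{ bounded}\}$; $\dot{\mathscr W}^{1,2}(\Omega)=\{v:v(\xi_0)=0,\ Dv\in\ell^2\}$. $\psi\in C^4(\mathbb R)$, $1$-periodic and even; $E^\Omega(y;\tilde y):=\sum_{b\in\mathcal B^\Omega}[\psi(Dy_b)-\psi(D\tilde y_b)]$; $\langle\delta^2E^\Omega(y)v,w\rangle:=\sum_{b\in\mathcal B^\Omega}\psi''(Dy_b)Dv_bDw_b$; $E:=E^\Lambda$. A locally stable equilibrium is $y$ with $E^\Omega(y+u;y)\ge0$ for all $u\in\mathscr W_0(\Omega)$ with $\|Du\|_{\ell^2}\le\epsilon$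 for some $\epsilon>0$; it is strongly stable if additionally $\langle\delta^2E^\Omega(y)v,v\rangle\ge\lambda\|Dv\|_{\ell^2}^2$ for all $v\in\mathscr W_0(\Omega)$, some $\lambda>0$. $\hat y(x):=\frac1{2\pi}\arg(x)$ (branch cut on the positive $x_1$-axis) as a function on $\Lambda$. (STAB): there is $u\in\dot{\mathscr W}^{1,2}(\Lambda)$ with $\hat y+u$ a strongly stable equilibrium of $E$; $\lambda_d$ denotes its strong stability constant $\lambda$. *)

(* Defs.v *)
From Stdlib Require Import Reals Lra ZArith List ClassicalEpsilon.
Open Scope R_scope.

(* Lattice sites are indexed by (m,n) : Z*Z, the site being
   (a1+a2)/3 + m a1 + n a2, a1=(1,0), a2=(1/2, sqrt3/2). *)
Definition site := (Z * Z)%type.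

Definition pos1 (x : site) : R := / 2 + IZR (fst x) + IZR (snd x) / 2.
Definition pos2 (x : site) : R := sqrt 3 / 6 + IZR (snd x) * sqrt 3 / 2.

Definition dir (k : nat) : site :=
  match k with
  | 0%nat => (1, 0)%Z
  | 1%nat => (0, 1)%Z
  | 2%nat => (-1, 1)%Z
  | 3%nat => (-1, 0)%Z
  | 4%nat => (0, -1)%Z
  | _ => (1, -1)%Z
  end.

Definition addS (x d : site) : site := (fst x + fst d, snd x + snd d)%Z.

Definition is_bond (xi eta : site) : Prop := exists k, (k <= 5)%nat /\ eta = addS xi (dir k).

Definition region := site -> Prop.
Definition Lambda : region := fun _ => True.
Definition bondIn (Om : region) (xi eta : site) : Prop := is_bond xi eta /\ Om xi /\ Om eta.

Definition D (y : site -> R) (xi eta : site) : R := y eta - y xi.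

Definition bterm (Om : region) (f : site -> site -> R) (xi : site) (k : nat) : R :=
  if excluded_middle_informative (Om xi /\ Om (addS xi (dir k)))
  then f xi (addS xi (dir k)) else 0.

Definition boxpt (N i j : nat) : site := (Z.of_nat i - Z.of_nat N, Z.of_nat j - Z.of_nat N)%Z.

Definition box_sum (Om : region) (f : site -> site -> R) (N : nat) : R :=
  sum_f_R0 (fun i => sum_f_R0 (fun j => sum_f_R0 (fun k => bterm Om f (boxpt N i j) k) 5)
                      (2 * N)) (2 * N).

(* "sum_{b in B^Omega} f(b) = S" : limit of the exhausting box sums
   (for finitely supported summands the box sums are eventually constant). *)
Definition bond_sum (Om : region) (f : site -> site -> R) (S : R) : Prop :=
  Un_cv (box_sum Om f) S.

Definition xi0 : site := (0, -1)%Z.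

Definition W0 (Om : region) (v : site -> R) : Prop :=
  v xi0 = 0 /\
  exists M : Z, forall xi eta, bondIn Om xi eta -> D v xi eta <> 0 ->
    (Z.abs (fst xi) <= M /\ Z.abs (snd xi) <= M)%Z.

Definition W12 (Om : region) (v : site -> R) : Prop :=
  v xi0 = 0 /\ exists S, bond_sum Om (fun a b => (D v a b) ^ 2) S.

Definition l2norm_is (Om : region) (v : site -> R) (r : R) : Prop :=
  exists S, bond_sum Om (fun a b => (D v a b) ^ 2) S /\ r = sqrt S.

Definition energy_diff (psi : R -> R) (Om : region) (y yt : site -> R) (e : R) : Prop :=
  bond_sum Om (fun a b => psi (D y a b) - psi (D yt a b)) e.

Definition hess_is (psi2 : R -> R) (Om : region) (y v w : site -> R) (q : R) : Prop :=
  bond_sum Om (fun a b => psi2 (D y a b) * D v a b * D w a b) q.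

Definition addF (y u : site -> R) : site -> R := fun x => y x + u x.

Definition locally_stable (psi : R -> R) (Om : region) (y : site -> R) : Prop :=
  exists eps, 0 < eps /\
    forall u, W0 Om u ->
      forall r, l2norm_is Om u r -> r <= eps ->
      forall e, energy_diff psi Om (addF y u) y e -> 0 <= e.

Definition strongly_stable_with (psi psi2 : R -> R) (Om : region) (y : site -> R) (lam : R)
  : Prop :=
  locally_stable psi Om y /\ 0 < lam /\
  forall v, W0 Om v ->
    forall q S, hess_is psi2 Om y v v q ->
                bond_sum Om (fun a b => (D v a b) ^ 2) S ->
                lam * S <= q.

Definition strongly_stable (psi psi2 : R -> R) (Om : region) (y : site -> R) : Prop :=
  exists lam, strongly_stable_with psi psi2 Om y lam.

(* arg(x) in [0, 2 pi), branch cut on the positive x1-axis *)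
Definition arg (x1 x2 : R) : R :=
  let r := sqrt (x1 ^ 2 + x2 ^ 2) in
  if Rle_dec 0 x2 then acos (x1 / r) else 2 * PI - acos (x1 / r).

Definition yhat : site -> R := fun x => arg (pos1 x) (pos2 x) / (2 * PI).

Definition zeroF : site -> R := fun _ => 0.

Definition psi_hyp (psi psi1 psi2 psi3 psi4 : R -> R) : Prop :=
  (forall x, derivable_pt_lim psi x (psi1 x)) /\
  (forall x, derivable_pt_lim psi1 x (psi2 x)) /\
  (forall x, derivable_pt_lim psi2 x (psi3 x)) /\
  (forall x, derivable_pt_lim psi3 x (psi4 x)) /\
  continuity psi4 /\
  (forall x, psi (x + 1) = psi x) /\
  (forall x, psi (- x) = psi x).

(* Main.v *)
Require Import Defs.
From Stdlib Require Import Reals Lra Lia ZArith Classical ClassicalEpsilon FunctionalExtensionality.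
Open Scope R_scope.

Definition S1 (N : nat) (h : Z -> R) : R :=
  sum_f_R0 (fun i => h (Z.of_nat i - Z.of_nat N)%Z) (2 * N).

Lemma S1_succ N h :
  S1 (S N) h = h (- (Z.of_nat N + 1))%Z + S1 N h + h (Z.of_nat N + 1)%Z.
Proof.
  unfold S1. replace (2 * S N)%nat with (S (S (2 * N))) by lia.
  rewrite tech5. rewrite decomp_sum by lia. simpl pred.
  f_equal; [f_equal|].
  - f_equal. lia.
  - apply sum_eq. intros i _. f_equal. lia.
  - f_equal. lia.
Qed.

Lemma sum_ge_term f n k : (forall i, 0 <= f i) -> (k <= n)%nat -> f k <= sum_f_R0 f n.
Proof.
  intros Hf Hk. induction n.
  - assert (k = 0%nat) by lia. subst. simpl. lra.
  - destruct (Nat.eq_dec k (S n)).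
    + subst. rewrite tech5. pose proof (cond_pos_sum f n Hf). lra.
    + rewrite tech5. specialize (Hf (S n)). assert (f k <= sum_f_R0 f n) by (apply IHn; lia). lra.
Qed.

Lemma S1_ge N h a : (forall z, 0 <= h z) -> (Z.abs a <= Z.of_nat N)%Z -> h a <= S1 N h.
Proof.
  intros Hh Ha. unfold S1.
  pose (k := Z.to_nat (a + Z.of_nat N)).
  replace a with (Z.of_nat k - Z.of_nat N)%Z at 1 by (unfold k; lia).
  apply (sum_ge_term (fun i => h (Z.of_nat i - Z.of_nat N)%Z)); [intros; apply Hh | unfold k; lia].
Qed.

Lemma S1_nonneg N h : (forall z, 0 <= h z) -> 0 <= S1 N h.
Proof. intros. unfold S1. apply cond_pos_sum. intros; auto. Qed.

Lemma S1_plus N f g : S1 N (fun z => f z + g z) = S1 N f + S1 N g.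
Proof. unfold S1. apply plus_sum. Qed.

Lemma S1_ext N f g : (forall z, f z = g z) -> S1 N f = S1 N g.
Proof. intros H. unfold S1. apply sum_eq. intros; auto. Qed.

Lemma S1_mono N f g : (forall z, f z <= g z) -> S1 N f <= S1 N g.
Proof. intros H. unfold S1. apply sum_growing. intros; auto. Qed.

Lemma S1_scal N c f : S1 N (fun z => c * f z) = c * S1 N f.
Proof. unfold S1. rewrite scal_sum. apply sum_eq. intros; ring. Qed.

Definition B (N : nat) (g : site -> R) : R := S1 N (fun a => S1 N (fun b => g (a, b))).

Definition inbox (N : nat) (x : site) : Prop :=
  (Z.abs (fst x) <= Z.of_nat N)%Z /\ (Z.abs (snd x) <= Z.of_nat N)%Z.

Lemma B_succ_eq N g : B (S N) g = B N g +
  (S1 (S N) (fun b => g (- (Z.of_nat N + 1), b)%Z) + S1 (S N) (fun b => g (Z.of_nat N + 1, b)%Z)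
   + S1 N (fun a => g (a, - (Z.of_nat N + 1))%Z) + S1 N (fun a => g (a, Z.of_nat N + 1)%Z)).
Proof.
  unfold B. rewrite S1_succ.
  rewrite (S1_ext N (fun a => S1 (S N) (fun b => g (a, b)))
     (fun a => (g (a, - (Z.of_nat N + 1))%Z + S1 N (fun b => g (a, b))) + g (a, Z.of_nat N + 1)%Z)).
  2:{ intros z. rewrite S1_succ. reflexivity. }
  rewrite S1_plus, S1_plus. ring.
Qed.

Lemma B_nonneg N g : (forall x, 0 <= g x) -> 0 <= B N g.
Proof. intros. unfold B. apply S1_nonneg. intros. apply S1_nonneg. auto. Qed.

Lemma B_layer N g x : (forall x, 0 <= g x) -> inbox (S N) x -> ~ inbox N x ->
  B N g + g x <= B (S N) g.
Proof.
  intros Hg Hin Hout. rewrite B_succ_eq. destruct x as [x1 x2]. unfold inbox in *; cbn [fst snd] in *.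
  rewrite Nat2Z.inj_succ in Hin.
  assert (H1 := S1_nonneg (S N) (fun b => g (- (Z.of_nat N + 1), b)%Z) ltac:(intros; apply Hg)).
  assert (H2 := S1_nonneg (S N) (fun b => g (Z.of_nat N + 1, b)%Z) ltac:(intros; apply Hg)).
  assert (H3 := S1_nonneg N (fun a => g (a, - (Z.of_nat N + 1))%Z) ltac:(intros; apply Hg)).
  assert (H4 := S1_nonneg N (fun a => g (a, Z.of_nat N + 1)%Z) ltac:(intros; apply Hg)).
  assert (Hx2 : (Z.abs x2 <= Z.of_nat (S N))%Z) by lia.
  destruct (Z.eq_dec x1 (- (Z.of_nat N + 1))%Z) as [E|E].
  { subst. pose proof (S1_ge (S N) (fun b => g (- (Z.of_nat N + 1), b)%Z) x2 ltac:(intros; apply Hg) Hx2). simpl in *. lra. }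
  destruct (Z.eq_dec x1 (Z.of_nat N + 1)%Z) as [E'|E'].
  { subst. pose proof (S1_ge (S N) (fun b => g (Z.of_nat N + 1, b)%Z) x2 ltac:(intros; apply Hg) Hx2). simpl in *. lra. }
  assert (Hx1 : (Z.abs x1 <= Z.of_nat N)%Z) by lia.
  destruct (Z.eq_dec x2 (- (Z.of_nat N + 1))%Z) as [F|F].
  { subst. pose proof (S1_ge N (fun a => g (a, - (Z.of_nat N + 1))%Z) x1 ltac:(intros; apply Hg) Hx1). simpl in *. lra. }
  assert (x2 = Z.of_nat N + 1)%Z by lia. subst.
  pose proof (S1_ge N (fun a => g (a, Z.of_nat N + 1)%Z) x1 ltac:(intros; apply Hg) Hx1). simpl in *. lra.
Qed.

Lemma B_step N g : (forall x, 0 <= g x) -> B N g <= B (S N) g.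
Proof.
  intros Hg. rewrite B_succ_eq.
  assert (H1 := S1_nonneg (S N) (fun b => g (- (Z.of_nat N + 1), b)%Z) ltac:(intros; apply Hg)).
  assert (H2 := S1_nonneg (S N) (fun b => g (Z.of_nat N + 1, b)%Z) ltac:(intros; apply Hg)).
  assert (H3 := S1_nonneg N (fun a => g (a, - (Z.of_nat N + 1))%Z) ltac:(intros; apply Hg)).
  assert (H4 := S1_nonneg N (fun a => g (a, Z.of_nat N + 1)%Z) ltac:(intros; apply Hg)).
  lra.
Qed.

Lemma B_mono N M g : (forall x, 0 <= g x) -> (N <= M)%nat -> B N g <= B M g.
Proof.
  intros Hg H. induction H; [lra|]. pose proof (B_step m g Hg). lra.
Qed.

Lemma B_ge N g x : (forall x, 0 <= g x) -> inbox N x -> g x <= B N g.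
Proof.
  intros Hg. induction N; intros Hin.
  - destruct x as [x1 x2]; unfold inbox in Hin; simpl in Hin.
    assert (x1 = 0%Z /\ x2 = 0%Z) as [-> ->] by lia. unfold B, S1. simpl. lra.
  - destruct (classic (inbox N x)) as [H|H].
    + pose proof (IHN H). pose proof (B_step N g Hg). lra.
    + pose proof (B_layer N g x Hg Hin H). pose proof (B_nonneg N g Hg). lra.
Qed.

Definition G (Om : region) (f : site -> site -> R) (x : site) : R :=
  sum_f_R0 (fun k => bterm Om f x k) 5.

Lemma box_B Om f N : box_sum Om f N = B N (G Om f).
Proof. reflexivity. Qed.

Lemma Un_cv_const c : Un_cv (fun _ => c) c.
Proof. intros e He. exists 0%nat. intros. unfold R_dist. rewrite Rminus_diag, Rabs_R0. lra. Qed.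

Lemma Un_cv_ext a b l : (forall n, a n = b n) -> Un_cv a l -> Un_cv b l.
Proof. intros H Ha e He. destruct (Ha e He) as [N HN]. exists N. intros n Hn. rewrite <- H. auto. Qed.

Lemma Un_cv_scal a l c : Un_cv a l -> Un_cv (fun n => c * a n) (c * l).
Proof. intros. apply (CV_mult (fun _ => c)); auto. apply Un_cv_const. Qed.

Lemma lim_nonneg a l : (forall n, 0 <= a n) -> Un_cv a l -> 0 <= l.
Proof. intros H Ha. apply (Rle_cv_lim (Un := fun _ => 0) (Vn := a)); auto. apply Un_cv_const. Qed.

Lemma bs_le g Sv N : (forall x, 0 <= g x) -> Un_cv (fun n => B n g) Sv -> B N g <= Sv.
Proof.
  intros Hg H. apply (growing_ineq (fun n => B n g)); auto.
  intros n. apply B_step; auto.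
Qed.

Lemma bs_tail g Sv : (forall x, 0 <= g x) -> Un_cv (fun n => B n g) Sv ->
  forall e, 0 < e -> exists N0, forall x, ~ inbox N0 x -> g x < e.
Proof.
  intros Hg H e He. destruct (H e He) as [N0 HN0]. exists N0. intros [x1 x2] Hx.
  pose (L := Z.to_nat (Z.max (Z.abs x1) (Z.abs x2))).
  assert (HL : (N0 < L)%nat).
  { unfold inbox in Hx; cbn [fst snd] in Hx. unfold L. lia. }
  destruct L as [|L'] eqn:EL; [lia|].
  assert (Hin : inbox (S L') (x1, x2)).
  { unfold inbox; cbn [fst snd]. rewrite <- EL. unfold L. lia. }
  assert (Hout : ~ inbox L' (x1, x2)).
  { unfold inbox; cbn [fst snd]. intros [A1 A2].
    assert (Z.of_nat (S L') = Z.max (Z.abs x1) (Z.abs x2)) by (rewrite <- EL; unfold L; lia). lia. }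
  pose proof (B_layer L' g _ Hg Hin Hout).
  pose proof (bs_le g Sv (S L') Hg H).
  pose proof (B_mono N0 L' g Hg ltac:(lia)).
  specialize (HN0 N0 (le_n _)). unfold R_dist in HN0. apply Rabs_def2 in HN0. lra.
Qed.

Lemma S1_zero N h : (forall z, h z = 0) -> S1 N h = 0.
Proof.
  intros H. rewrite (S1_ext N h (fun z => 0 * h z)). rewrite S1_scal. ring.
  intros z. rewrite H. ring.
Qed.

Lemma bs_const g M : (forall x, ~ inbox M x -> g x = 0) -> Un_cv (fun n => B n g) (B M g).
Proof.
  intros Hg.
  assert (E : forall n, (M <= n)%nat -> B n g = B M g).
  { intros n Hn. induction Hn; auto. rewrite B_succ_eq.
    rewrite (S1_zero (S m)), (S1_zero (S m)), (S1_zero m), (S1_zero m).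
    - rewrite IHHn. ring.
    - intros z. apply Hg. unfold inbox; cbn [fst snd]. lia.
    - intros z. apply Hg. unfold inbox; cbn [fst snd]. lia.
    - intros z. apply Hg. unfold inbox; cbn [fst snd]. lia.
    - intros z. apply Hg. unfold inbox; cbn [fst snd]. lia. }
  intros e He. exists M. intros n Hn. rewrite E by lia. unfold R_dist. rewrite Rminus_diag, Rabs_R0. lra.
Qed.

Lemma bterm_nonneg Om f x k : (forall a b, 0 <= f a b) -> 0 <= bterm Om f x k.
Proof. intros. unfold bterm. destruct excluded_middle_informative; auto; lra. Qed.

Lemma G_nonneg Om f x : (forall a b, 0 <= f a b) -> 0 <= G Om f x.
Proof. intros. unfold G. apply cond_pos_sum. intros. apply bterm_nonneg; auto. Qed.

Lemma bterm_le_G Om f x k : (forall a b, 0 <= f a b) -> (k <= 5)%nat -> bterm Om f x k <= G Om f x.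
Proof. intros. unfold G. apply (sum_ge_term (fun k => bterm Om f x k)); auto. intros; apply bterm_nonneg; auto. Qed.

Lemma cont_eps f x : continuity_pt f x ->
  forall e, 0 < e -> exists d, 0 < d /\ forall y, Rabs (y - x) < d -> Rabs (f y - f x) < e.
Proof.
  intros H e He. destruct (H e He) as [d [Hd H']]. exists d. split; auto.
  intros y Hy. destruct (Req_dec y x) as [->|Hne].
  - rewrite Rminus_diag, Rabs_R0. lra.
  - apply H'. split; [split; [exact I| auto] | exact Hy].
Qed.

Lemma psi1_0 psi psi1 psi2 psi3 psi4 : psi_hyp psi psi1 psi2 psi3 psi4 -> psi1 0 = 0.
Proof.
  intros (H1 & H2 & H3 & H4 & H5 & H6 & H7).
  assert (Hc : derivable_pt_lim (comp psi Ropp) 0 (psi1 (- 0) * (-1))).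
  { apply derivable_pt_lim_comp.
    - replace (-1) with (- (1)) by ring. apply derivable_pt_lim_opp. apply derivable_pt_lim_id.
    - apply H1. }
  assert (E : comp psi Ropp = psi).
  { apply functional_extensionality. intros x. unfold comp. apply H7. }
  rewrite E, Ropp_0 in Hc. pose proof (uniqueness_limite _ _ _ _ Hc (H1 0)). lra.
Qed.

Lemma psi2_cont psi psi1 psi2 psi3 psi4 : psi_hyp psi psi1 psi2 psi3 psi4 -> forall x, continuity_pt psi2 x.
Proof.
  intros (H1 & H2 & H3 & _) x. apply derivable_continuous_pt. exists (psi3 x). apply H3.
Qed.

Lemma psi_min psi psi1 psi2 psi3 psi4 : psi_hyp psi psi1 psi2 psi3 psi4 -> 0 < psi2 0 ->
  exists d, 0 < d /\ forall x, Rabs x <= d -> psi 0 <= psi x.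
Proof.
  intros Hp Hpos. pose proof (psi1_0 _ _ _ _ _ Hp) as H10.
  pose proof (psi2_cont _ _ _ _ _ Hp 0) as Hcont.
  destruct Hp as (H1 & H2 & _).
  destruct (cont_eps psi2 0 Hcont (psi2 0 / 2) ltac:(lra)) as [d [Hd Hc]].
  assert (Hp2 : forall y, Rabs y < d -> 0 < psi2 y).
  { intros y Hy. assert (Rabs (psi2 y - psi2 0) < psi2 0 / 2) by (apply Hc; rewrite Rminus_0_r; auto).
    apply Rabs_def2 in H. lra. }
  exists (d / 2). split; [lra|]. intros x Hx.
  destruct (Rtotal_order x 0) as [Hneg|[Hz|Hpos']].
  - destruct (MVT_cor2 psi psi1 x 0 Hneg ltac:(intros; apply H1)) as [c [Ec Hcr]].
    destruct (MVT_cor2 psi1 psi2 c 0 ltac:(lra) ltac:(intros; apply H2)) as [e [Ee Her]].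
    assert (0 < psi2 e) by (apply Hp2; apply Rabs_def1; unfold Rabs in Hx; destruct Rcase_abs in Hx; lra).
    rewrite H10 in Ee. assert (0 < psi1 c \/ psi1 c < 0) as Hs by (destruct (Rlt_dec 0 c); [left|right]; nra). destruct Hs; nra.
  - subst. lra.
  - destruct (MVT_cor2 psi psi1 0 x Hpos' ltac:(intros; apply H1)) as [c [Ec Hcr]].
    destruct (MVT_cor2 psi1 psi2 0 c ltac:(lra) ltac:(intros; apply H2)) as [e [Ee Her]].
    assert (0 < psi2 e) by (apply Hp2; apply Rabs_def1; unfold Rabs in Hx; destruct Rcase_abs in Hx; lra).
    rewrite H10 in Ee. assert (0 < psi1 c \/ psi1 c < 0) as Hs by (destruct (Rlt_dec 0 c); [left|right]; nra). destruct Hs; nra.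
Qed.

Lemma W0_vanish Om v f : W0 Om v -> (forall a b, D v a b = 0 -> f a b = 0) ->
  exists M, forall x, ~ inbox M x -> G Om f x = 0.
Proof.
  intros [_ [Mz HM]] Hf. exists (Z.to_nat Mz). intros x Hx. unfold G.
  rewrite (sum_eq _ (fun _ => 0)).
  { simpl. ring. }
  intros k Hk. unfold bterm. destruct excluded_middle_informative as [[Ha Hb]|]; auto.
  apply Hf. destruct (Req_dec (D v x (addS x (dir k))) 0) as [E|E]; auto.
  exfalso. apply Hx. destruct (HM x (addS x (dir k))) as [A1 A2]; auto.
  - split; [exists k; split; auto | auto].
  - unfold inbox. lia.
Qed.

Lemma W0_bs Om v f : W0 Om v -> (forall a b, D v a b = 0 -> f a b = 0) ->
  exists S, bond_sum Om f S.
Proof.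
  intros Hv Hf. destruct (W0_vanish Om v f Hv Hf) as [M HM].
  exists (B M (G Om f)). unfold bond_sum. apply (Un_cv_ext (fun n => B n (G Om f))).
  - intros; reflexivity.
  - apply bs_const. auto.
Qed.

Lemma bs_term_le Om f S x k : (forall a b, 0 <= f a b) -> bond_sum Om f S -> (k <= 5)%nat ->
  bterm Om f x k <= S.
Proof.
  intros Hf Hs Hk.
  pose (N := Z.to_nat (Z.max (Z.abs (fst x)) (Z.abs (snd x)))).
  assert (Hin : inbox N x) by (unfold inbox, N; lia).
  pose proof (bterm_le_G Om f x k Hf Hk).
  pose proof (B_ge N (G Om f) x (fun x => G_nonneg Om f x Hf) Hin).
  pose proof (bs_le (G Om f) S N (fun x => G_nonneg Om f x Hf) Hs). lra.
Qed.

Lemma bterm_true Om f x k : Om x -> Om (addS x (dir k)) -> bterm Om f x k = f x (addS x (dir k)).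
Proof. intros. unfold bterm. destruct excluded_middle_informative as [|n]; auto. tauto. Qed.

Lemma nat_big (c : R) : exists K : nat, c < INR K.
Proof.
  destruct (archimed c) as [H1 _].
  exists (Z.to_nat (up c)). rewrite INR_IZR_INZ.
  destruct (Z_le_gt_dec 0 (up c)).
  - rewrite Z2Nat.id; auto.
  - replace (Z.to_nat (up c)) with 0%nat by lia. simpl.
    assert (IZR (up c) <= 0) by (apply IZR_le; lia). lra.
Qed.

Lemma sqrt3_ge1 : 1 <= sqrt 3.
Proof. rewrite <- sqrt_1. apply sqrt_le_1_alt. lra. Qed.

Lemma yhat_far : forall e, 0 < e -> exists K : nat, forall k : nat, (K <= k)%nat ->
  forall a : site, (Z.abs (fst a + Z.of_nat k) <= 1)%Z -> (Z.abs (snd a - 2 * Z.of_nat k) <= 1)%Z ->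
  Rabs (yhat a - / 4) < e.
Proof.
  intros e He.
  assert (Hac : continuity_pt acos 0).
  { apply derivable_continuous_pt. apply derivable_pt_acos. lra. }
  pose proof PI_RGT_0 as HPI.
  destruct (cont_eps acos 0 Hac (2 * PI * e) ltac:(nra)) as [d [Hd Hc]].
  destruct (nat_big (2 / d + 1)) as [K HK].
  exists K. intros k Hk [a1 a2] Ha1 Ha2. cbn [fst snd] in Ha1, Ha2.
  assert (HkK : INR K <= INR k) by (apply le_INR; auto).
  assert (Ra1 : -1 <= IZR a1 + INR k <= 1).
  { rewrite INR_IZR_INZ, <- plus_IZR. split; apply IZR_le; lia. }
  assert (Ra2 : -1 <= IZR a2 - 2 * INR k <= 1).
  { rewrite INR_IZR_INZ. replace (IZR a2 - 2 * IZR (Z.of_nat k)) with (IZR (a2 - 2 * Z.of_nat k))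
      by (rewrite minus_IZR, mult_IZR; reflexivity). split; apply IZR_le; lia. }
  pose proof sqrt3_ge1 as Hs3.
  set (p1 := pos1 (a1, a2)). set (p2 := pos2 (a1, a2)).
  assert (Hp1 : -1 <= p1 <= 2) by (unfold p1, pos1; cbn [fst snd]; lra).
  assert (Hdk : 2 / d < INR k - 1) by lra.
  assert (H2d : 2 < d * (INR k - 1)).
  { apply (Rmult_lt_compat_l d) in Hdk; auto. unfold Rdiv in Hdk.
    rewrite <- Rmult_assoc, (Rmult_comm d 2), Rmult_assoc, Rinv_r, Rmult_1_r in Hdk; lra. }
  assert (Hkpos : 1 < INR k) by nra.
  assert (Hp2 : INR k - 1 <= p2).
  { unfold p2, pos2; cbn [fst snd].
    assert (0 <= sqrt 3 / 6) by lra. nra. }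
  set (r := sqrt (p1 ^ 2 + p2 ^ 2)).
  assert (Hr : p2 <= r).
  { unfold r. rewrite <- (sqrt_pow2 p2) at 1 by lra. apply sqrt_le_1_alt. nra. }
  assert (Hz : Rabs (p1 / r) < d).
  { unfold Rdiv. rewrite Rabs_mult, Rabs_inv, (Rabs_pos_eq r) by lra.
    assert (Rabs p1 <= 2) by (unfold Rabs; destruct Rcase_abs; lra).
    assert (/ r <= / p2) by (apply Rinv_le_contravar; lra).
    assert (0 < / r) by (apply Rinv_0_lt_compat; lra).
    assert (Rabs p1 * / r <= 2 * / p2) by (apply Rmult_le_compat; auto; try apply Rabs_pos; lra).
    assert (2 * / p2 < d).
    { apply (Rmult_lt_reg_r p2); [lra|]. rewrite Rmult_assoc, Rinv_l by lra. nra. }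
    lra. }
  assert (Hy : yhat (a1, a2) = acos (p1 / r) / (2 * PI)).
  { unfold yhat, arg. fold p1 p2. cbv zeta. fold r.
    destruct (Rle_dec 0 p2); [reflexivity | lra]. }
  rewrite Hy.
  specialize (Hc (p1 / r) ltac:(rewrite Rminus_0_r; auto)). rewrite acos_0 in Hc.
  apply Rabs_def2 in Hc. apply Rabs_def1.
  - apply (Rmult_lt_reg_r (2 * PI)); [lra|].
    replace ((acos (p1 / r) / (2 * PI) - / 4) * (2 * PI)) with (acos (p1 / r) - PI / 2) by (field; lra). lra.
  - apply (Rmult_lt_reg_r (2 * PI)); [lra|].
    replace ((acos (p1 / r) / (2 * PI) - / 4) * (2 * PI)) with (acos (p1 / r) - PI / 2) by (field; lra). lra.
Qed.

Lemma B_scal N c g : B N (fun x => c * g x) = c * B N g.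
Proof.
  unfold B. rewrite <- S1_scal. apply S1_ext. intros a. apply S1_scal.
Qed.

Lemma B_monof N f g : (forall x, f x <= g x) -> B N f <= B N g.
Proof. intros H. unfold B. apply S1_mono. intros a. apply S1_mono. intros b. apply H. Qed.

Lemma G_le_scal Om f1 f2 c x : (forall k, (k <= 5)%nat -> bterm Om f1 x k <= c * bterm Om f2 x k) ->
  G Om f1 x <= c * G Om f2 x.
Proof.
  intros H. unfold G. rewrite scal_sum. apply sum_Rle. intros k Hk. rewrite Rmult_comm. auto.
Qed.

Lemma dir_bound j : (Z.abs (fst (dir j)) <= 1)%Z /\ (Z.abs (snd (dir j)) <= 1)%Z.
Proof. destruct j as [|[|[|[|[|]]]]]; simpl; lia. Qed.

Lemma lam_le psi psi1 psi2 psi3 psi4 lam u :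
  psi_hyp psi psi1 psi2 psi3 psi4 -> W12 Lambda u ->
  strongly_stable_with psi psi2 Lambda (addF yhat u) lam -> lam <= psi2 0.
Proof.
  intros Hp Hu HS.
  destruct HS as [_ [Hlam HS]].
  assert (Main : forall e, 0 < e -> lam <= psi2 0 + e).
  2:{ destruct (Rle_dec lam (psi2 0)); auto. specialize (Main ((lam - psi2 0)/2) ltac:(lra)). lra. }
  intros e He.
  destruct (cont_eps psi2 0 (psi2_cont _ _ _ _ _ Hp 0) e He) as [d1 [Hd1 Hc]].
  destruct Hu as [_ [Su HSu]].
  set (gs := G Lambda (fun a b => (D u a b) ^ 2)).
  assert (Hgs : forall x, 0 <= gs x) by (intros; apply G_nonneg; intros; apply pow2_ge_0).
  assert (HSu' : Un_cv (fun n => B n gs) Su) by exact HSu.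
  destruct (bs_tail gs Su Hgs HSu' ((d1/2)^2) ltac:(nra)) as [N0 HN0].
  destruct (yhat_far (d1/4) ltac:(lra)) as [K HK].
  set (k := (Nat.max K (N0 + 3) + 3)%nat).
  set (xi := (- Z.of_nat k, 2 * Z.of_nat k)%Z : site).
  set (v := fun x : site => if excluded_middle_informative (x = xi) then 1 else 0).
  assert (Hvxi : v xi = 1) by (unfold v; destruct excluded_middle_informative; [auto|congruence]).
  assert (Hvo : forall x, x <> xi -> v x = 0) by (intros; unfold v; destruct excluded_middle_informative; [congruence|auto]).
  assert (Hsupp : forall x j, (j <= 5)%nat -> D v x (addS x (dir j)) <> 0 ->
            x = xi \/ addS x (dir j) = xi).
  { intros x j _ H. destruct (classic (x = xi)); auto. destruct (classic (addS x (dir j) = xi)); auto.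
    exfalso. apply H. unfold D. rewrite !Hvo; auto. ring. }
  assert (Hnear : forall x j, (j <= 5)%nat -> D v x (addS x (dir j)) <> 0 ->
     (Z.abs (fst x + Z.of_nat k) <= 1)%Z /\ (Z.abs (snd x - 2 * Z.of_nat k) <= 1)%Z /\
     (Z.abs (fst (addS x (dir j)) + Z.of_nat k) <= 1)%Z /\ (Z.abs (snd (addS x (dir j)) - 2 * Z.of_nat k) <= 1)%Z).
  { intros x j Hj H. pose proof (dir_bound j) as [B1 B2].
    destruct (Hsupp x j Hj H) as [E|E].
    - subst x. unfold addS, xi.
      change (fst (- Z.of_nat k, 2 * Z.of_nat k)%Z) with (- Z.of_nat k)%Z.
      change (snd (- Z.of_nat k, 2 * Z.of_nat k)%Z) with (2 * Z.of_nat k)%Z.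
      change (fst ((- Z.of_nat k + fst (dir j))%Z, (2 * Z.of_nat k + snd (dir j))%Z)) with (- Z.of_nat k + fst (dir j))%Z.
      change (snd ((- Z.of_nat k + fst (dir j))%Z, (2 * Z.of_nat k + snd (dir j))%Z)) with (2 * Z.of_nat k + snd (dir j))%Z. lia.
    - destruct x as [x1 x2].
      assert (E1 : (x1 + fst (dir j) = - Z.of_nat k)%Z) by (apply (f_equal fst) in E; exact E).
      assert (E2 : (x2 + snd (dir j) = 2 * Z.of_nat k)%Z) by (apply (f_equal snd) in E; exact E).
      unfold addS. change (fst (x1, x2)) with x1. change (snd (x1, x2)) with x2.
      change (fst (x1 + fst (dir j), x2 + snd (dir j))%Z) with (x1 + fst (dir j))%Z.
      change (snd (x1 + fst (dir j), x2 + snd (dir j))%Z) with (x2 + snd (dir j))%Z. lia. }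
  assert (Hv : W0 Lambda v).
  { split.
    - apply Hvo. unfold xi0, xi. intros E. injection E as E1 E2. lia.
    - exists (2 * Z.of_nat k + 2)%Z. intros x y [[j [Hj ->]] _] H.
      destruct (Hnear x j Hj H) as (A1 & A2 & _). lia. }
  set (y := addF yhat u).
  assert (Hpsi : forall x j, (j <= 5)%nat -> D v x (addS x (dir j)) <> 0 ->
            psi2 (D y x (addS x (dir j))) <= psi2 0 + e).
  { intros x j Hj H. destruct (Hnear x j Hj H) as (A1 & A2 & A3 & A4).
    assert (Hk : (K <= k)%nat) by (unfold k; lia).
    pose proof (HK k Hk x A1 A2) as Y1. pose proof (HK k Hk _ A3 A4) as Y2.
    assert (Hout : ~ inbox N0 x) by (unfold inbox; unfold k in A1; lia).
    pose proof (HN0 x Hout) as Hg.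
    pose proof (bterm_le_G Lambda (fun a b => (D u a b) ^ 2) x j ltac:(intros; apply pow2_ge_0) Hj) as Hb.
    rewrite bterm_true in Hb by exact I. fold gs in Hb.
    assert (Hdu : Rabs (D u x (addS x (dir j))) < d1 / 2).
    { apply Rabs_def1.
      - destruct (Rlt_dec (D u x (addS x (dir j))) (d1/2)); auto. nra.
      - destruct (Rlt_dec (- (d1/2)) (D u x (addS x (dir j)))); auto. nra. }
    apply Rabs_def2 in Y1. apply Rabs_def2 in Y2. apply Rabs_def2 in Hdu.
    assert (Rabs (D y x (addS x (dir j)) - 0) < d1).
    { unfold y, D, addF in *. apply Rabs_def1; lra. }
    specialize (Hc _ H0). apply Rabs_def2 in Hc. lra. }
  set (fs := fun a b => (D v a b) ^ 2).
  set (fh := fun a b => psi2 (D y a b) * D v a b * D v a b).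
  destruct (W0_bs Lambda v fs Hv) as [S HSs].
  { intros a b E. unfold fs. rewrite E. ring. }
  destruct (W0_bs Lambda v fh Hv) as [q Hq].
  { intros a b E. unfold fh. rewrite E. ring. }
  pose proof (HS v Hv q S Hq HSs) as Hineq.
  assert (Hqle : q <= (psi2 0 + e) * S).
  { apply (Rle_cv_lim (Un := box_sum Lambda fh) (Vn := fun n => (psi2 0 + e) * box_sum Lambda fs n)).
    - intros n. rewrite !box_B. rewrite <- B_scal. apply B_monof. intros x. apply G_le_scal.
      intros j Hj. rewrite !bterm_true by exact I. unfold fh, fs.
      destruct (Req_dec (D v x (addS x (dir j))) 0) as [E|E].
      + rewrite E. lra.
      + pose proof (Hpsi x j Hj E). pose proof (pow2_ge_0 (D v x (addS x (dir j)))). nra.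
    - exact Hq.
    - apply Un_cv_scal. exact HSs. }
  assert (HS1 : 1 <= S).
  { pose proof (bs_term_le Lambda fs S xi 0 ltac:(intros; apply pow2_ge_0) HSs ltac:(lia)) as H.
    rewrite bterm_true in H by exact I. unfold fs, D in H. rewrite Hvxi, Hvo in H.
    - lra.
    - unfold xi, addS; simpl. intros E. injection E as E1. lia. }
  nra.
Qed.

Lemma hess_zero psi2 Om v : W0 Om v ->
  exists S, bond_sum Om (fun a b => (D v a b) ^ 2) S /\ hess_is psi2 Om zeroF v v (psi2 0 * S).
Proof.
  intros Hv. destruct (W0_bs Om v (fun a b => (D v a b) ^ 2) Hv) as [S HS].
  { intros a b E. rewrite E. ring. }
  exists S. split; auto. unfold hess_is, bond_sum.
  apply (Un_cv_ext (fun n => psi2 0 * box_sum Om (fun a b => (D v a b) ^ 2) n)).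
  2: apply Un_cv_scal; exact HS.
  intros n. rewrite !box_B, <- B_scal. f_equal. apply functional_extensionality. intros x.
  unfold G. rewrite scal_sum. apply sum_eq. intros k _. unfold bterm.
  destruct excluded_middle_informative; [unfold D, zeroF; rewrite Rminus_diag; ring | ring].
Qed.

Theorem mainTheorem3 (psi psi1 psi2 psi3 psi4 : R -> R)
  (Hpsi : psi_hyp psi psi1 psi2 psi3 psi4)
  (lam_d : R) (u : site -> R)
  (Hu : W12 Lambda u)
  (HSTAB : strongly_stable_with psi psi2 Lambda (addF yhat u) lam_d) :
  (forall Om : region,
     strongly_stable psi psi2 Om zeroF /\
     (forall v, W0 Om v ->
        exists S, bond_sum Om (fun a b => (D v a b) ^ 2) S /\
                  hess_is psi2 Om zeroF v v (psi2 0 * S))) /\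
  lam_d <= psi2 0 /\ 0 < lam_d.
Proof.
  pose proof (lam_le _ _ _ _ _ _ _ Hpsi Hu HSTAB) as Hle.
  assert (Hl : 0 < lam_d) by (destruct HSTAB as [_ [H _]]; exact H).
  split; [|split; auto].
  intros Om. split; [|intros v Hv; apply hess_zero; auto].
  exists (psi2 0). split; [|split; [lra|]].
  - destruct (psi_min _ _ _ _ _ Hpsi ltac:(lra)) as [d [Hd Hmin]].
    exists d. split; auto. intros w Hw r [S [HS Er]] Hr e He.
    apply (lim_nonneg (box_sum Om (fun a b => psi (D (addF zeroF w) a b) - psi (D zeroF a b))) e); [|exact He].
    intros n. rewrite box_B. apply B_nonneg. intros x.
    unfold G. apply (Rle_trans _ (sum_f_R0 (fun _ => 0) 5)); [simpl; lra|].
    apply sum_Rle. intros k Hk. unfold bterm.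
    destruct excluded_middle_informative as [[Hx Hy]|]; [|lra].
    pose proof (bs_term_le Om (fun a b => (D w a b) ^ 2) S x k ltac:(intros; apply pow2_ge_0) HS Hk) as Hb.
    rewrite bterm_true in Hb by auto.
    assert (Habs : Rabs (D w x (addS x (dir k))) <= d).
    { apply (Rle_trans _ r); auto. rewrite Er, <- (sqrt_pow2 (Rabs _)) by apply Rabs_pos.
      apply sqrt_le_1_alt. rewrite RPow_abs. rewrite Rabs_pos_eq by apply pow2_ge_0. exact Hb. }
    pose proof (Hmin _ Habs). unfold D, addF, zeroF in *.
    replace (0 + w (addS x (dir k)) - (0 + w x)) with (w (addS x (dir k)) - w x) by ring.
    replace (0 - 0) with 0 by ring. lra.
  - intros v Hv q S Hq HS.
    destruct (hess_zero psi2 Om v Hv) as [S' [HS' Hq']].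
    rewrite (UL_sequence _ _ _ HS HS'), (UL_sequence _ _ _ Hq Hq'). lra.
Qed.
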